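(* There exists $\Delta_0$ such that for every simple graph $G=(V,E)$ of maximum degree $\Delta\ge\Delta_0$ there is a set $F\subseteq E$ such that every vertex $v$ with $d(v)\ge\Delta/3$ is incident with at least two edges of $F$, and every vertex of $G$ is incident with at most $15\ln\Delta$ edges of $F$.
   Context: $G$ is a simple graph and $d(v)$ denotes the degree of $v$ in $G$. *)

(* Defs.v *)
From mathcomp Require Import all_boot.
From Stdlib Require Import Reals.
Set Implicit Arguments. Unset Strict Implicit. Unset Printing Implicit Defensive.

Definition simple_graph (T : finType) (e : rel T) : Prop :=
  symmetric e /\ irreflexive e.

Definition deg (T : finType) (e : rel T) (v : T) : nat := #|[set u | e v u]|.

Definition maxdeg (T : finType) (e : rel T) : nat := \max_(v : T) deg e v.

Definition edge_subset (T : finType) (e f : rel T) : Prop :=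
  symmetric f /\ (forall u v, f u v -> e u v).

(* Main.v *)
Require Import Defs.
From mathcomp Require Import all_boot.
From Stdlib Require Import Reals.
From mathcomp Require Import zify.
From Stdlib Require Import Lra.
Set Implicit Arguments. Unset Strict Implicit. Unset Printing Implicit Defensive.
Section Assign.
Variables (J V : finType) (act : pred J) (allowed : J -> V -> bool).

Definition load (a : {ffun J -> V}) x := #|[set j | act j && (a j == x)]|.
Definition validb (a : {ffun J -> V}) := [forall j, act j ==> allowed j (a j)].
Definition Phi (a : {ffun J -> V}) := \sum_x load a x * load a x.
Definition step (a : {ffun J -> V}) x y := [exists j, [&& act j, a j == x & allowed j y]].

Lemma upd_load (a : {ffun J -> V}) j1 y x : act j1 ->
  load [ffun j => if j == j1 then y else a j] x + (a j1 == x) = load a x + (y == x).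
Proof.
move=> Hj; rewrite /load (cardsD1 j1 [set j | _]) (cardsD1 j1 [set j | act j && (a j == x)]).
rewrite !inE ffunE eqxx Hj /=.
have -> : [set j | act j && ([ffun j => if j == j1 then y else a j] j == x)] :\ j1 =
          [set j | act j && (a j == x)] :\ j1.
  by apply/setP=> j; rewrite !inE ffunE; case: (j =P j1).
lia.
Qed.

Lemma transfer (a : {ffun J -> V}) p : forall u, validb a -> path (step a) u p -> uniq (u :: p) ->
  exists a' : {ffun J -> V}, [/\ validb a',
    (forall x, load a' x + (x == u) = load a x + (x == last u p)) &
    (forall j, a j \notin u :: p -> a' j = a j)].
Proof.
elim: p => [|x1 p IH] u Hv.
  by move=> _ _; exists a; split.
rewrite /= => /andP[/existsP[j1 /and3P[Hact /eqP Haj1 Hal]] Hp] /andP[Hu Hun].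
have [a'' [Hv'' Hl'' Hag'']] := IH x1 Hv Hp Hun.
have Ha''j1 : a'' j1 = u by rewrite Hag'' // Haj1.
exists [ffun j => if j == j1 then x1 else a'' j]; split.
- apply/forallP=> j; rewrite ffunE; case: (j =P j1) => [->|_]; first by rewrite Hal implybT.
  exact: (forallP Hv'' j).
- move=> x; have := upd_load a'' x1 x Hact; rewrite Ha''j1 => H1.
  have := Hl'' x; rewrite !(eq_sym x) => H2. by rewrite H1 H2.
- move=> j; rewrite in_cons negb_or => /andP[Hju Hjp]; rewrite ffunE.
  case: (j =P j1) => [Hj|_]; first by rewrite Hj Haj1 eqxx in Hju.
  exact: Hag''.
Qed.


Lemma phi_lt (a a' : {ffun J -> V}) u w :
  (forall x, load a' x + (x == u) = load a x + (x == w)) ->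
  load a w + 2 <= load a u -> Phi a' < Phi a.
Proof.
move=> Hl Hlt.
have Huw : u != w by apply/eqP=> E; rewrite E in Hlt; lia.
have E : forall b : {ffun J -> V}, Phi b = load b u * load b u + (load b w * load b w + \sum_(i | (i != u) && (i != w)) load b i * load b i).
  by move=> b; rewrite /Phi (bigD1 u) //= (bigD1 w) //= eq_sym.
rewrite !E.
have -> : \sum_(i | (i != u) && (i != w)) load a' i * load a' i = \sum_(i | (i != u) && (i != w)) load a i * load a i.
  apply: eq_bigr => i /andP[Hiu Hiw]; have := Hl i; rewrite (negbTE Hiu) (negbTE Hiw).
  by rewrite !addn0 => ->.
have H1 := Hl u; have H2 := Hl w.
rewrite eqxx (negbTE Huw) in H1; rewrite eqxx eq_sym (negbTE Huw) in H2.
rewrite addnA [X in _ < X]addnA ltn_add2r.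
have Eu : load a' u = (load a u).-1 by lia.
have Ew : load a' w = (load a w).+1 by lia.
rewrite Eu Ew. move: Hlt; set x := load a u; set y := load a w => Hlt.
rewrite -(subnKC Hlt); set k := x - (y + 2).
nia.
Qed.

Lemma assign (x0 : V) (d D : nat) :
  0 < d ->
  (forall j, act j -> d <= #|[set w | allowed j w]|) ->
  (forall w, #|[set j | act j && allowed j w]| <= D) ->
  exists a : {ffun J -> V}, (forall j, act j -> allowed j (a j)) /\
    forall x, d * load a x <= D + d.
Proof.
move=> Hd Hdeg HD.
pose a0 := [ffun j => odflt x0 [pick w | allowed j w]].
have Hv0 : validb a0.
  apply/forallP=> j; apply/implyP=> Hj; rewrite ffunE.
  case: pickP => [w //|H0].
  have : #|[set w | allowed j w]| = 0 by apply: eq_card0 => w; rewrite inE H0.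
  by have := Hdeg j Hj; lia.
case: (@arg_minnP _ a0 validb Phi Hv0) => a Hva Hmin.
exists a; split; first by move=> j Hj; exact: (implyP (forallP Hva j) Hj).
move=> x.
pose R := [set w | connect (step a) x w].
pose S := [set j | act j && (a j \in R)].
have C1 : forall w, w \in R -> load a x <= load a w + 1.
  move=> w; rewrite inE => /connectP[p Hp ->].
  case: (shortenP Hp) => p' Hp' Hu' _.
  have [a' [Hv' Hl' _]] := transfer Hva Hp' Hu'.
  rewrite leqNgt; apply/negP => Hlt.
  have Hlt2 : load a (last x p') + 2 <= load a x by lia.
  have := phi_lt Hl' Hlt2; have := Hmin a' Hv'; lia.
have C2 : \sum_(w in R) load a w = #|S|.
  rewrite -sum1_card (partition_big (fun j => a j) (mem R)); last by move=> j; rewrite inE => /andP[].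
  apply: eq_bigr => w Hw; rewrite /load -sum1_card; apply: eq_bigl => j.
  rewrite !inE; case: (a j =P w) => [->|]; last by rewrite !andbF.
  move: Hw; rewrite inE => ->; by case: (act j).
have C3 : d * #|S| <= #|R| * D.
  rewrite -sum1_card big_distrr /= muln1.
  apply: (@leq_trans (\sum_(j in S) \sum_(w in R) allowed j w)).
    apply: leq_sum => j; rewrite inE => /andP[Hj HjR].
    apply: (leq_trans (Hdeg j Hj)).
    rewrite -sum1_card big_mkcond /= [X in _ <= X]big_mkcond /=.
    apply: leq_sum => w _; rewrite inE; case Ha: (allowed j w); last by case: (w \in R).
    have -> : w \in R.
      rewrite /R !inE in HjR *; apply: connect_trans HjR _; apply: connect1.
      by apply/existsP; exists j; rewrite Hj eqxx Ha.
    by [].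
  rewrite exchange_big /= -sum_nat_const; apply: leq_sum => w _.
  apply: leq_trans (HD w); rewrite -sum1_card [X in _ <= X]big_mkcond [X in X <= _]big_mkcond /=.
  apply: leq_sum => j _; rewrite !inE; case: (act j) => //=; case: (allowed j w); rewrite //=.
  by case: (connect _ _ _).
  by case: (connect _ _ _).
have C4 : load a x * #|R| <= #|S| + #|R|.
  rewrite mulnC -sum_nat_const -C2 -sum1_card -big_split /=; apply: leq_sum => w0 Hw0; rewrite -addn1; exact: C1.
have HR : 0 < #|R| by apply/card_gt0P; exists x; rewrite inE connect0.
have : d * load a x * #|R| <= (D + d) * #|R|.
  rewrite -mulnA; apply: (leq_trans (leq_mul (leqnn d) C4)). rewrite mulnDr mulnDl leq_add2r mulnC; by rewrite mulnC in C3; rewrite [D * _]mulnC.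
by rewrite leq_pmul2r.
Qed.

End Assign.

Section Graph.
Variables (T : finType) (e : rel T).
Hypothesis He : simple_graph e.

Definition high v := maxdeg e <= 3 * deg e v.
Definition nb v := enum [set u | e v u].
Definition kk v := deg e v %/ 2.
Definition part (b : bool) v := if b then drop (kk v) (nb v) else take (kk v) (nb v).
Definition gact (j : T * bool) := high j.1.
Definition gall (j : T * bool) (w : T) := w \in part j.2 j.1.

Lemma size_nb v : size (nb v) = deg e v.
Proof. by rewrite /nb /deg cardE. Qed.

Lemma uniq_part b v : uniq (part b v).
Proof. by case: b; rewrite /part ?drop_uniq ?take_uniq // /nb enum_uniq. Qed.

Lemma part_e b v w : w \in part b v -> e v w.
Proof.
case: b; rewrite /part => /[dup] _; [move/mem_drop|move/mem_take]; by rewrite /nb mem_enum inE.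
Qed.

Lemma part_disj v w : w \in part false v -> w \in part true v -> False.
Proof.
rewrite /part => H1 H2.
have := enum_uniq (mem [set u | e v u]); rewrite -/(nb v) -(cat_take_drop (kk v) (nb v)) cat_uniq.
case/and3P => _ /hasPn H _; have := H w H2; by rewrite H1.
Qed.

Lemma card_part b v : #|[set w | gall (v, b) w]| = size (part b v).
Proof. rewrite cardsE; apply/card_uniqP; exact: uniq_part. Qed.

Lemma size_part b v : size (part b v) = if b then deg e v - kk v else kk v.
Proof.
case: b; rewrite /part ?size_drop ?size_take size_nb //.
rewrite /kk; case: ltnP => //; lia.
Qed.

Lemma deg_le v : deg e v <= maxdeg e.
Proof. rewrite /maxdeg; exact: leq_bigmax. Qed.

End Graph.

Theorem mainTheorem3 :
  exists Delta0 : nat,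
    forall (T : finType) (e : rel T),
      simple_graph e ->
      Delta0 <= maxdeg e ->
      exists f : rel T,
        edge_subset e f /\
        (forall v : T, maxdeg e <= 3 * deg e v -> 2 <= deg f v) /\
        (forall v : T, (INR (deg f v) <= 15 * ln (INR (maxdeg e)))%R).
Proof.
exists 70 => T e He HM.
set M := maxdeg e in HM *.
have [x0 _] : exists x0 : T, true.
  case: (pickP (@predT T)) => [x _|H0]; first by exists x.
  have : M = 0.
    rewrite /M /maxdeg; apply/eqP; rewrite -leqn0.
    by apply/bigmax_leqP => i _; have := H0 i.
  lia.
have Hd : 0 < M %/ 7 by lia.
have Hsz : forall v b, high e v -> M %/ 7 <= size (part e b v).
  move=> v b; rewrite /high -/M size_part /kk => Hv; case: b; lia.
have Hdeg : forall j, gact e j -> M %/ 7 <= #|[set w | gall e j w]|.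
  by case=> v b; rewrite /gact /= card_part; apply: Hsz.
have HD : forall w, #|[set j | gact e j && gall e j w]| <= M.
  move=> w; rewrite -(card_in_imset (f := fst)).
    apply: leq_trans (deg_le e w); apply: subset_leq_card; apply/subsetP => v.
    case/imsetP => -[v' b] /= ; rewrite !inE => /andP[_ Hw] ->.
    case: He => Hsym _; rewrite Hsym; exact: part_e Hw.
  case=> v b [v' b']; rewrite !inE /= => /andP[_ H1] /andP[_ H2] Hv; subst v'.
  rewrite /gall /= in H1 H2; congr pair.
  case: b b' H1 H2 => -[] // H1 H2; [exfalso; exact: part_disj H2 H1|exfalso; exact: part_disj H1 H2].
have [a [Hval Hload]] := @assign (T * bool)%type T (gact e) (gall e) x0 (M %/ 7) M Hd Hdeg HD.
pose f := fun u w : T => [exists b, high e u && (a (u, b) == w)] || [exists b, high e w && (a (w, b) == u)].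
have Hfe : forall u w, f u w -> e u w.
  move=> u w; case/orP => /existsP[b /andP[Hh /eqP <-]].
    exact: (@part_e T e b u (a (u, b)) (Hval (u, b) Hh)).
  case: He => Hsym _; rewrite Hsym.
  exact: (@part_e T e b w (a (w, b)) (Hval (w, b) Hh)).
exists f; split; [split|split].
- by move=> u w; rewrite /f orbC.
- exact: Hfe.
- move=> v Hv.
  have Hne : a (v, false) != a (v, true).
    apply/eqP => E; apply: (@part_disj T e v (a (v, false))); first exact: (Hval (v, false) Hv).
    rewrite E; exact: (Hval (v, true) Hv).
  rewrite /deg; apply: (@leq_trans #|[set a (v, false); a (v, true)]|); first by rewrite cards2 Hne.
  apply: subset_leq_card.
  apply/subsetP => w; rewrite !inE => /orP[] /eqP ->; apply/orP; left; apply/existsP.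
    by exists false; apply/andP; split; [exact: Hv|].
  by exists true; apply/andP; split; [exact: Hv|].
- move=> v.
  have Hl : load (gact e) a v <= 8.
    have := Hload v; set L := load _ _ _ => H.
    rewrite leqNgt; apply/negP => HL.
    have : M %/ 7 * 9 <= M %/ 7 * L by rewrite leq_mul2l HL orbT.
    lia.
  have Hdf : deg f v <= 10.
    rewrite /deg.
    apply: (@leq_trans #|[set a (v, false); a (v, true)] :|: [set j.1 | j in [set j | gact e j && (a j == v)]]|).
      apply: subset_leq_card; apply/subsetP => w; rewrite !inE => /orP[] /existsP[b /andP[Hh /eqP Hw]].
        by apply/orP; left; case: b Hw => ->; rewrite eqxx ?orbT.
      apply/orP; right; apply/imsetP; exists (w, b) => //; by rewrite inE /gact /= Hh Hw eqxx.
    apply: (leq_trans (leq_card_setU _ _)).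
    have := leq_imset_card fst [set j | gact e j && (a j == v)].
    have := cards2 (a (v, false)) (a (v, true)).
    rewrite /load in Hl; case: (_ != _) => /= H2 H3; rewrite H2; exact: (leq_trans (leq_add (leqnn _) (leq_trans H3 Hl))).

  have HMr : (exp 1 < INR M)%R.
    apply: (Rle_lt_trans _ 3); first exact: exp_le_3.
    have -> : 3%R = INR 3 by rewrite /= ; ring.
    apply: lt_INR; apply/ltP; lia.
  have Hln : (1 < ln (INR M))%R.
    rewrite -[X in (X < _)%R]ln_exp; apply: ln_increasing => //; exact: exp_pos.
  have : (INR (deg f v) <= 10)%R.
    have -> : 10%R = INR 10 by rewrite /=; ring.
    apply: le_INR; apply/leP; exact: Hdf.
  move=> H10; apply: (Rle_trans _ _ _ H10).
  apply: (Rle_trans _ 15%R); first lra.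
  lra.
Qed.
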